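(* Let $\mathcal{H}_O\simeq\mathbb{C}^{d_O}$ and $\mathcal{H}_R\simeq\mathbb{C}^{d_R}$. Let $H_R=\sum_{m=1}^{d_R}\lambda_m^{\uparrow}|\xi_m\rangle\langle\xi_m|$ with $\lambda_1^\uparrow\leqslant\dots\leqslant\lambda_{d_R}^\uparrow$ and $\{|\xi_m\rangle\}$ an orthonormal basis; let $\beta\in(0,\infty)$ and $\rho_R(\beta)=e^{-\beta H_R}/\mathrm{tr}[e^{-\beta H_R}]=\sum_m r_m^{\downarrow}|\xi_m\rangle\langle\xi_m|$. Let $\rho_O=\sum_{l=1}^{d_O}o_l^{\downarrow}|\varphi_l\rangle\langle\varphi_l|$ with $o_1^\downarrow\geqslant\dots\geqslant o_{d_O}^\downarrow$ and $\{|\varphi_l\rangle\}$ an orthonormal basis, and $\rho=\rho_O\otimes\rho_R(\beta)$. Let $p_{\varphi_1}^{\max}$ be the sum of the $d_R$ largest numbers among $\{o_l^\downarrow r_m^\downarrow\}_{l,m}$ (counted with multiplicity). Consider the following sequential swap algorithm, which applies a sequence of unitaries to $\rho$; throughout, the current state is diagonal in the basis $\{|\varphi_l\rangle\otimes|\xi_m\rangle\}$ and $p_{l,m}$ denotes its current diagonal entry at $|\varphi_l\rangle\otimes|\xi_m\rangle$ (initially $p_{l,m}=o_l^\downarrow r_m^\downarrow$). For $i=2,3,\dots,d_R$ (outer loop), for $m=d_R,d_R-1,\dots,1$ (middle loop), for $l=d_O,d_O-1,\dots,2$ (inner loop): if $p_{1,i}<p_{l,m}$, apply the unitary that swaps the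 basis vectors $|\varphi_1\rangle\otimes|\xi_i\rangle$ and $|\varphi_l\rangle\otimes|\xi_m\rangle$ and acts as the identity on all other basis vectors (this exchanges $p_{1,i}$ and $p_{l,m}$); otherwise do nothing. Let $\rho^{(j)}$ be the state after the $j$-th swap actually performed ($\rho^{(0)}=\rho$), $\rho_O^{(j)}=\mathrm{tr}_R[\rho^{(j)}]$, $\delta_j=p_{\varphi_1}^{\max}-\langle\varphi_1|\rho_O^{(j)}|\varphi_1\rangle$, and $\Delta Q_j=\mathrm{tr}[H_R(\mathrm{tr}_O[\rho^{(j)}]-\rho_R(\beta))]$. Then $(\delta_j)_j$ is non-increasing, $(\Delta Q_j)_j$ is non-decreasing, and for every $j$ the state $\rho_O^{(j)}$ is passive with respect to the ordered basis $(|\varphi_l\rangle)_l$, i.e. it is diagonal in this basis and $\langle\varphi_a|\rho_O^{(j)}|\varphi_a\rangle\geqslant\langle\varphi_b|\rho_O^{(j)}|\varphi_b\rangle$ whenever $a<b$.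
   Context: $\mathrm{tr}_O,\mathrm{tr}_R$ denote partial traces over $\mathcal{H}_O$ and $\mathcal{H}_R$. In the paper the basis $(|\varphi_l\rangle)_l$ is thought of as the eigenbasis of an object Hamiltonian in increasing order of energy, which is what makes this notion ''passive''. *)

(* Defs.v *)
From mathcomp Require Import all_boot all_order all_algebra.
From mathcomp Require Import reals sequences exp.
Set Implicit Arguments. Unset Strict Implicit. Unset Printing Implicit Defensive.
Import Order.TTheory GRing.Theory Num.Theory.
Local Open Scope ring_scope.

(* Conventions (0-based): the object basis (|phi_l>)_l is indexed by
   'I_dO.+1 (so phi_1 is index 0), the reservoir eigenbasis (|xi_m>)_m by
   'I_dR.+1.  Every state occurring in the algorithm is diagonal in the
   product basis |phi_l> (x) |xi_m>, and is represented by its diagonal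
   p : 'I_dO.+1 -> 'I_dR.+1 -> R  (p l m = <phi_l xi_m| rho |phi_l xi_m>). *)

Section Defs.
Variable R : realType.
Variables dO dR : nat.

Definition dstate := 'I_dO.+1 -> 'I_dR.+1 -> R.

Definition gibbs (beta : R) (lam : 'I_dR.+1 -> R) (m : 'I_dR.+1) : R :=
  expR (- beta * lam m) / \sum_(k < dR.+1) expR (- beta * lam k).

Definition prod_state (o : 'I_dO.+1 -> R) (r : 'I_dR.+1 -> R) : dstate :=
  fun l m => o l * r m.

Definition trR_diag (p : dstate) (l : 'I_dO.+1) : R := \sum_(m < dR.+1) p l m.
Definition trO_diag (p : dstate) (m : 'I_dR.+1) : R := \sum_(l < dO.+1) p l m.

Definition pmax (o : 'I_dO.+1 -> R) (r : 'I_dR.+1 -> R) : R :=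
  \sum_(k < dR.+1)
     nth 0 (sort (fun x y : R => y <= x)
                 [seq o lm.1 * r lm.2 | lm : 'I_dO.+1 * 'I_dR.+1]) k.

Definition swap_state (p : dstate) (i : 'I_dR.+1) (l : 'I_dO.+1) (m : 'I_dR.+1)
  : dstate :=
  fun a b =>
    if (a, b) == (l, m) then p ord0 i
    else if (a, b) == (ord0, i) then p l m
    else p a b.

(* loop indices (0-based): i = 1..dR, m = dR downto 0, l = dO downto 1 *)
Definition loop_indices : seq (nat * nat * nat) :=
  flatten [seq [seq (i, m, l) | m <- rev (iota 0 dR.+1),
                                 l <- rev (iota 1 dO)] | i <- iota 1 dR].

(* one step: accumulator = (current state, list of states after each
   performed swap, starting with rho^(0)) *)
Definition algo_step (acc : dstate * seq dstate) (t : nat * nat * nat)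
  : dstate * seq dstate :=
  let: (p, hist) := acc in
  let: (i, m, l) := t in
  let i' : 'I_dR.+1 := inord i in
  let m' : 'I_dR.+1 := inord m in
  let l' : 'I_dO.+1 := inord l in
  if p ord0 i' < p l' m' then
    let p' := swap_state p i' l' m' in (p', rcons hist p')
  else (p, hist).

Definition swap_history (p0 : dstate) : seq dstate :=
  (foldl algo_step (p0, [:: p0]) loop_indices).2.

Definition delta (o : 'I_dO.+1 -> R) (r : 'I_dR.+1 -> R) (p : dstate) : R :=
  pmax o r - trR_diag p ord0.

Definition heat (lam : 'I_dR.+1 -> R) (r : 'I_dR.+1 -> R) (p : dstate) : R :=
  \sum_(m < dR.+1) lam m * (trO_diag p m - r m).

(* passivity of tr_R[rho] w.r.t. the ordered basis (|phi_l>)_l: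
   (diagonality is automatic in this diagonal representation) *)
Definition passive_diag (p : dstate) : Prop :=
  forall a b : 'I_dO.+1, (a < b)%N -> trR_diag p b <= trR_diag p a.

End Defs.

(* Main.v *)
Require Import Defs.
From mathcomp Require Import all_boot all_order all_algebra.
From mathcomp Require Import reals sequences exp.
From mathcomp Require Import ring lra.
Import Order.TTheory GRing.Theory Num.Theory.
Local Open Scope ring_scope.
Set Implicit Arguments. Unset Strict Implicit.

Lemma sum_ind (R : realType) n (j : 'I_n) (F : 'I_n -> R) :
  \sum_(k < n) (k == j)%:R * F k = F j.
Proof.
rewrite (bigD1 j) //= eqxx mul1r big1 ?addr0 // => k /negbTE ->.
by rewrite mul0r.
Qed.

Lemma swap_props (R : realType) dO dR (p : dstate R dO dR) i l m
  (hl : l != ord0) (hxy : p ord0 i < p l m)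
  (hJ : forall b : 'I_dO.+1, (l < b)%N -> p b m <= p ord0 i)
  (hI3 : forall (a b : 'I_dO.+1) k, (a <= b)%N -> p b k <= p a k) :
  (forall a k, a != ord0 -> swap_state p i l m a k <= p a k) /\
  (forall k, p ord0 k <= swap_state p i l m ord0 k) /\
  (forall (a b : 'I_dO.+1) k, (a <= b)%N ->
       swap_state p i l m b k <= swap_state p i l m a k) /\
  (forall b : 'I_dO.+1, (l <= b)%N -> swap_state p i l m b m <= swap_state p i l m ord0 i).
Proof.
have hA : forall a k, a != ord0 -> swap_state p i l m a k <= p a k.
  move=> a k ha; rewrite /swap_state !xpair_eqE (negbTE ha) andFb.
  by case: ifP => [/andP[/eqP -> /eqP ->]|_] //; exact: ltW.
have hl' : (ord0 == l) = false by rewrite eq_sym (negbTE hl).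
have hB : forall k, p ord0 k <= swap_state p i l m ord0 k.
  move=> k; rewrite /swap_state !xpair_eqE hl' andFb eqxx andTb.
  by case: (k =P i) => [->|_] //; exact: ltW.
have hx : swap_state p i l m ord0 i = p l m.
  by rewrite /swap_state !xpair_eqE hl' andFb !eqxx.
split => //; split => //; split.
- move=> a b k hab.
  have [a0|an0] := eqVneq a ord0.
  + rewrite a0; have [b0|bn0] := eqVneq b ord0; first by rewrite b0.
    apply: le_trans (hA _ _ bn0) _; apply: le_trans (hB _).
    by apply: hI3.
  + have bn0 : b != ord0.
      apply: contra an0 => /eqP b0; rewrite -val_eqE /=.
      by move: hab; rewrite b0 leqn0.
    have [hlm|] := boolP ((a == l) && (k == m)).
    * move: hlm => /andP[/eqP al /eqP km].
      have ->: swap_state p i l m a k = p ord0 i.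
        by rewrite /swap_state al km !xpair_eqE !eqxx.
      have [bl|bl] := eqVneq b l.
        by rewrite /swap_state bl km !xpair_eqE !eqxx.
      have ->: swap_state p i l m b k = p b k.
        by rewrite /swap_state !xpair_eqE (negbTE bl) (negbTE bn0).
      rewrite km; apply: hJ.
      by rewrite ltn_neqAle -al hab andbT; apply: contra bl => /eqP e;
         apply/eqP/val_inj; rewrite /= -e al.
    * move=> hn.
      have ->: swap_state p i l m a k = p a k.
        by rewrite /swap_state !xpair_eqE (negbTE hn) (negbTE an0).
      by apply: le_trans (hA _ _ bn0) (hI3 _ _ _ hab).
- move=> b hb; rewrite hx.
  have bn0 : b != ord0.
    apply: contra hl => /eqP b0; rewrite -val_eqE /=; move: hb; rewrite b0 leqn0.
    by [].
  apply: le_trans (hA _ _ bn0) _.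
  rewrite leq_eqVlt in hb; case/orP: hb => [hb|hb].
  + by have -> : b = l by apply/val_inj/eqP; rewrite eq_sym.
  + by apply: le_trans (hJ _ hb) (ltW hxy).
Qed.


Lemma heat_swap (R : realType) dO dR (lam r : 'I_dR.+1 -> R) (p : dstate R dO dR) i l m
  (hl : l != ord0) :
  heat lam r (swap_state p i l m) - heat lam r p
  = (lam i - lam m) * (p l m - p ord0 i).
Proof.
have hcol : forall k, trO_diag (swap_state p i l m) k - trO_diag p k
   = (k == m)%:R * (p ord0 i - p l m) + (k == i)%:R * (p l m - p ord0 i).
  move=> k; rewrite /trO_diag -sumrB.
  rewrite (eq_bigr (fun a => (a == l)%:R * ((k == m)%:R * (p ord0 i - p l m))
                         + (a == ord0)%:R * ((k == i)%:R * (p l m - p ord0 i)))).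
    by rewrite big_split /= !sum_ind.
  move=> a _; rewrite /swap_state !xpair_eqE.
  case: (a =P l) => [al|al]; case: (a =P ord0) => [a0|a0].
  - by move: hl; rewrite -al a0 eqxx.
  - subst a; case: (k =P m) => [km|km]; case: (k =P i) => [ki|ki] /=;
      subst; rewrite ?mul1r ?mul0r; ring.
  - subst a; case: (k =P m) => [km|km]; case: (k =P i) => [ki|ki] /=;
      subst; rewrite ?mul1r ?mul0r; ring.
  - by rewrite /= subrr; ring.
rewrite /heat -sumrB.
rewrite (eq_bigr (fun k => (k == m)%:R * (lam k * (p ord0 i - p l m)) + (k == i)%:R * (lam k * (p l m - p ord0 i)))).
  by rewrite big_split /= !sum_ind; ring.
move=> k _; rewrite -mulrBr opprB addrA subrK.
have := hcol k; rewrite -/(trO_diag _ k) => ->.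
ring.
Qed.


Definition Inv (R : realType) dO dR (p0 p : dstate R dO dR) : Prop :=
  (forall k, p0 ord0 k <= p ord0 k) /\
  (forall a k, a != ord0 -> p a k <= p0 a k) /\
  (forall (a b : 'I_dO.+1) k, (a <= b)%N -> p b k <= p a k).

Definition Qr (R : realType) dO dR (lam r : 'I_dR.+1 -> R) (p p' : dstate R dO dR) : bool :=
  [&& trR_diag p ord0 <= trR_diag p' ord0, heat lam r p <= heat lam r p' &
   [forall a : 'I_dO.+1, forall b : 'I_dO.+1, (a < b)%N ==> (trR_diag p' b <= trR_diag p' a)]].

Definition AccInv (R : realType) dO dR (lam r : 'I_dR.+1 -> R) (p0 : dstate R dO dR)
  (acc : dstate R dO dR * seq (dstate R dO dR)) : Prop :=
  Inv p0 acc.1 /\ exists s, acc.2 = p0 :: s /\ last p0 s = acc.1 /\ path (Qr lam r) p0 s.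

Lemma step (R : realType) dO dR (lam r : 'I_dR.+1 -> R) (p0 : dstate R dO dR)
  (hlam : forall a b : 'I_dR.+1, (a <= b)%N -> lam a <= lam b)
  (hp0 : forall (l : 'I_dO.+1) (m i : 'I_dR.+1), (i <= m)%N -> p0 l m <= p0 ord0 i)
  acc (i m l : nat) (hl1 : (1 <= l)%N) (hl2 : (l <= dO)%N) :
  AccInv lam r p0 acc ->
  (forall b : 'I_dO.+1, (l < b)%N -> acc.1 b (inord m) <= acc.1 ord0 (inord i)) ->
  AccInv lam r p0 (algo_step acc (i, m, l)) /\
  (forall b : 'I_dO.+1, (l <= b)%N ->
     (algo_step acc (i, m, l)).1 b (inord m) <= (algo_step acc (i, m, l)).1 ord0 (inord i)).
Proof.
case: acc => p hist [[I1 [I2 I3]] [s [hs [hlast hpath]]]] /= hJ.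
simpl in hs, hlast.
set i' : 'I_dR.+1 := inord i; set m' : 'I_dR.+1 := inord m.
set l' : 'I_dO.+1 := inord l.
have vl : nat_of_ord l' = l by rewrite /l' inordK // ltnS.
have hl : l' != ord0 by rewrite -val_eqE /= vl; case: l hl1 {hl2 vl l' hJ}.
have hJ' : forall b : 'I_dO.+1, (l' < b)%N -> p b m' <= p ord0 i' by rewrite vl.
case: ifP => hxy /=; last first.
  split; first by split; [split=> // | exists s].
  move=> b; rewrite leq_eqVlt => /orP[/eqP hb|hb]; last exact: hJ.
  have -> : b = l' by apply/val_inj; rewrite /= vl.
  by rewrite leNgt hxy.
have [hA [hB [hI3 hJ2]]] := swap_props hl hxy hJ' I3.
set p' := swap_state p i' l' m'.
have I3' := hI3.
split; last by move=> b hb; apply: hJ2; rewrite vl.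
split.
  split; first by move=> k; apply: le_trans (I1 k) (hB k).
  split=> //; move=> a k ha; exact: le_trans (hA a k ha) (I2 a k ha).
exists (rcons s p'); split; first by rewrite hs.
split; first by rewrite last_rcons.
rewrite rcons_path hpath hlast /=.
apply/and3P; split.
- by apply: ler_sum => k _; apply: hB.
- rewrite -subr_ge0 heat_swap //; apply: mulr_ge0; last by rewrite subr_ge0 ltW.
  rewrite subr_ge0; apply: hlam; rewrite leqNgt; apply/negP => him.
  have : p l' m' <= p ord0 i'.
    apply: le_trans (I2 _ _ hl) _; apply: le_trans (hp0 _ _ _ (ltnW him)) (I1 _).
  by rewrite leNgt hxy.
- apply/forallP => a; apply/forallP => b; apply/implyP => hab.
  by apply: ler_sum => k _; apply: I3'; apply: ltnW.
Qed.

Lemma inner (R : realType) dO dR (lam r : 'I_dR.+1 -> R) (p0 : dstate R dO dR)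
  (hlam : forall a b : 'I_dR.+1, (a <= b)%N -> lam a <= lam b)
  (hp0 : forall (l : 'I_dO.+1) (m i : 'I_dR.+1), (i <= m)%N -> p0 l m <= p0 ord0 i)
  (i m : nat) k : (k <= dO)%N -> forall acc,
  AccInv lam r p0 acc ->
  (forall b : 'I_dO.+1, (k < b)%N -> acc.1 b (inord m) <= acc.1 ord0 (inord i)) ->
  AccInv lam r p0 (foldl (@algo_step R dO dR) acc [seq (i, m, l) | l <- rev (iota 1 k)]).
Proof.
elim: k => [|k IH] hk acc hA hJ; first exact: hA.
have -> : (iota 1 k.+1 = iota 1 k ++ [:: k.+1])%N by rewrite -(addn1 k) iotaD /= addnC.
rewrite rev_cat /=.
have [hA' hJ'] := step hlam hp0 (ltn0Sn k) hk hA hJ.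
apply: IH (ltnW hk) _ hA' _.
by move=> b hb; apply: hJ'.
Qed.

Unset Implicit Arguments. Set Strict Implicit.

Lemma foldl_flatten_ (A B : Type) (f : A -> B -> A) a ss :
  foldl f a (flatten ss) = foldl (foldl f) a ss.
Proof. by elim: ss a => [|s ss IH] a //=; rewrite foldl_cat IH. Qed.

Lemma foldl_inv_ (A : Type) (B : eqType) (P : A -> Prop) (f : A -> B -> A) s a :
  P a -> (forall a x, x \in s -> P a -> P (f a x)) -> P (foldl f a s).
Proof.
elim: s a => [|x s IH] a //= Pa Hf; apply: IH => [|b y hy]; first by apply: Hf; rewrite ?inE ?eqxx.
by apply: Hf; rewrite inE hy orbT.
Qed.

Theorem lemma4 (R : realType) (dO dR : nat)
  (lam : 'I_dR.+1 -> R) (beta : R) (o : 'I_dO.+1 -> R)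
  (hlam : forall a b : 'I_dR.+1, (a <= b)%N -> lam a <= lam b)
  (hbeta : 0 < beta)
  (ho_nonneg : forall l, 0 <= o l)
  (ho_sum : \sum_(l < dO.+1) o l = 1)
  (ho_dec : forall a b : 'I_dO.+1, (a <= b)%N -> o b <= o a) :
  let r := gibbs beta lam in
  let hist := swap_history (prod_state o r) in
  (forall j : nat, (j.+1 < size hist)%N ->
     delta o r (nth (prod_state o r) hist j.+1)
       <= delta o r (nth (prod_state o r) hist j)) /\
  (forall j : nat, (j.+1 < size hist)%N ->
     heat lam r (nth (prod_state o r) hist j)
       <= heat lam r (nth (prod_state o r) hist j.+1)) /\
  (forall j : nat, (j < size hist)%N ->
     passive_diag (nth (prod_state o r) hist j)).
Proof.
move=> r hist.
have r_ge0 : forall k, 0 <= r k.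
  move=> k; rewrite /r /gibbs divr_ge0 ?expR_ge0 //.
  by apply: sumr_ge0 => ? _; apply: expR_ge0.
have r_dec : forall a b : 'I_dR.+1, (a <= b)%N -> r b <= r a.
  move=> a b hab.
  have Z0 : 0 <= \sum_(k < dR.+1) expR (- beta * lam k).
    by apply: sumr_ge0 => ? _; apply: expR_ge0.
  rewrite /r /gibbs ler_wpM2r ?invr_ge0 // ler_expR.
  by rewrite !mulNr lerN2 ler_pM2l // hlam.
set p0 := prod_state o r.
have hp0 : forall (l : 'I_dO.+1) (m i : 'I_dR.+1), (i <= m)%N -> p0 l m <= p0 ord0 i.
  move=> l m i him; rewrite /p0 /prod_state.
  apply: le_trans (_ : o ord0 * r m <= _).
    by rewrite ler_wpM2r // ho_dec.
  by rewrite ler_wpM2l // r_dec.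
have I0 : Inv p0 p0.
  split=> //; split=> // a b k hab; rewrite /p0 /prod_state.
  by rewrite ler_wpM2r // ho_dec.
have A0 : AccInv lam r p0 (p0, [:: p0]) by split=> //; exists [::].
have Afin : AccInv lam r p0 (foldl (@algo_step R dO dR) (p0, [:: p0]) (loop_indices dO dR)).
  rewrite /loop_indices foldl_flatten_.
  apply: foldl_inv_ A0 _ => a x /mapP[i _ ->] hA.
  rewrite foldl_flatten_.
  apply: foldl_inv_ hA _ => a' y /mapP[m _ ->] hA'.
  apply: (inner (i:=i) (m:=m) hlam hp0 (leqnn dO) hA').
  by move=> b hb; move: (ltn_ord b); rewrite ltnS leqNgt hb.
case: Afin => _ [s [hs [_ hpath]]].
have hh : hist = p0 :: s by rewrite /hist /swap_history hs.
have hQ : forall j, (j < size s)%N -> Qr lam r (nth p0 (p0 :: s) j) (nth p0 s j).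
  by move=> j hj; move/(pathP p0): hpath; apply.
rewrite hh /=; split; last split.
- move=> j hj; have /and3P[h1 _ _] := hQ j hj.
  by rewrite /delta lerD2l lerN2.
- by move=> j hj; have /and3P[_ h2 _] := hQ j hj.
- case=> [|j] hj /=.
    move=> a b hab; apply: ler_sum => k _.
    by case: I0 => _ [_ I3]; apply: I3; apply: ltnW.
  have /and3P[_ _ /forallP h3] := hQ j hj.
  by move=> a b hab; have /forallP/(_ b)/implyP := h3 a; apply.
Qed.
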